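(* Let $X$ be a set and let $\mathscr{A}$ be a non-empty family of subsets of $X$ which is closed under finite intersections. Then $$\mathscr{L}_1(\mathscr{A}) := \{d \in \mathscr{P}(X) : d \text{ is bounded on } A \times A \text{ for some } A \in \mathscr{A}\}$$ is a Lipschitz structure for $X$.
   Context: $\mathscr{P}(X)$ denotes the family of all pseudo-metrics on $X$ (symmetric maps $d: X\times X \to [0,\infty)$ satisfying the triangle inequality and vanishing on the whole diagonal). A Lipschitz structure for $X$ is a non-empty family $\mathscr{L}$ of pseudo-metrics on $X$ such that: (L1) if $d$ is a pseudo-metric on $X$ with $d \le d_1$ for some $d_1 \in \mathscr{L}$, then $d \in \mathscr{L}$; (L2) if $d \in \mathscr{L}$ then $\alpha d \in \mathscr{L}$ for every real $\alpha>0$; (L3) if $d_1,d_2 \in \mathscr{L}$ then $d_1 \vee d_2$ (pointwise maximum) belongs to $\mathscr{L}$. *)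

(* Defs.v *)
From Stdlib Require Import Reals.
Open Scope R_scope.

Definition pseudo_metric {X : Type} (d : X -> X -> R) : Prop :=
  (forall x y, 0 <= d x y) /\
  (forall x, d x x = 0) /\
  (forall x y, d x y = d y x) /\
  (forall x y z, d x z <= d x y + d y z).

Definition lipschitz_structure {X : Type} (L : (X -> X -> R) -> Prop) : Prop :=
  (forall d, L d -> pseudo_metric d) /\
  (exists d, L d) /\
  (forall d d1, pseudo_metric d -> L d1 -> (forall x y, d x y <= d1 x y) -> L d) /\
  (forall d (alpha : R), L d -> 0 < alpha -> L (fun x y => alpha * d x y)) /\
  (forall d1 d2, L d1 -> L d2 -> L (fun x y => Rmax (d1 x y) (d2 x y))).

Definition bounded_on {X : Type} (d : X -> X -> R) (A : X -> Prop) : Prop :=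
  exists M : R, forall x y, A x -> A y -> d x y <= M.

Definition L1 {X : Type} (AA : (X -> Prop) -> Prop) (d : X -> X -> R) : Prop :=
  pseudo_metric d /\ exists A, AA A /\ bounded_on d A.

(* Main.v *)
Require Import Defs.
From Stdlib Require Import Reals Lra.

Lemma pm_scale {X : Type} (d : X -> X -> R) a : pseudo_metric d -> 0 < a ->
  pseudo_metric (fun x y => a * d x y).
Proof.
  intros [H1 [H2 [H3 H4]]] Ha; repeat split; intros.
  - specialize (H1 x y); nra.
  - rewrite H2; ring.
  - rewrite H3; ring.
  - specialize (H4 x y z); nra.
Qed.

Lemma pm_max {X : Type} (d1 d2 : X -> X -> R) : pseudo_metric d1 -> pseudo_metric d2 ->
  pseudo_metric (fun x y => Rmax (d1 x y) (d2 x y)).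
Proof.
  intros [H1 [H2 [H3 H4]]] [G1 [G2 [G3 G4]]]; repeat split; intros.
  - specialize (H1 x y); unfold Rmax; destruct Rle_dec; lra.
  - rewrite H2, G2; unfold Rmax; destruct Rle_dec; lra.
  - rewrite H3, G3; reflexivity.
  - specialize (H4 x y z); specialize (G4 x y z).
    unfold Rmax; repeat destruct Rle_dec; lra.
Qed.

Theorem theorem3p1 (X : Type) (AA : (X -> Prop) -> Prop)
  (Hne : exists A, AA A)
  (Hcap : forall A B, AA A -> AA B -> AA (fun x => A x /\ B x)) :
  lipschitz_structure (L1 AA).
Proof.
  split; [|split; [|split; [|split]]].
  - intros d [H _]; exact H.
  - destruct Hne as [A HA]. exists (fun _ _ => 0). split.
    + repeat split; intros; lra.
    + exists A; split; [exact HA|]. exists 0; intros; lra.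
  - intros d d1 Hd [_ [A [HA [M HM]]]] Hle. split; [exact Hd|].
    exists A; split; [exact HA|]. exists M; intros x y Hx Hy.
    specialize (HM x y Hx Hy); specialize (Hle x y); lra.
  - intros d a [Hd [A [HA [M HM]]]] Ha. split; [apply pm_scale; auto|].
    exists A; split; [exact HA|]. exists (a * M); intros x y Hx Hy.
    specialize (HM x y Hx Hy); nra.
  - intros d1 d2 [Hd1 [A [HA [M HM]]]] [Hd2 [B [HB [N HN]]]].
    split; [apply pm_max; auto|].
    exists (fun x => A x /\ B x); split; [auto|].
    exists (Rmax M N); intros x y [Ax Bx] [Ay By].
    specialize (HM x y Ax Ay); specialize (HN x y Bx By).
    unfold Rmax; repeat destruct Rle_dec; lra.
Qed.
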